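(* Let $(M,d,X,C)$ be a metric coordinate system for which $(X,d_C)$ is locally compact, let $S$ be a closed subset of $(X,d_C)$, and let $V:(X,d_C)\to(TX,d_C^T)$ be a locally Lipschitz metric-coordinate vector field such that for each $x\in S$ there exists a curve $\phi^x:[0,\delta)\to S$ (some $\delta>0$) belonging to the equivalence class $V(x)$. Then $S$ is positively invariant with respect to $V$: every solution $\sigma:[0,\delta)\to X$ of $V$ with $\sigma(0)\in S$ satisfies $\sigma(t)\in S$ for all $t\in[0,\delta)$.
   Context: A metric coordinate system is a quadruple $(M,d,X,C)$ where $(M,d)$ is a metric space, $X\subset M$, and $C\subset M$ is a metric coordinatizing set for $X$: for all $x,y\in X$ with $x\neq y$ there is $c\in C$ with $d(x,c)\neq d(y,c)$. For $x\in X$ and $c\in C$ write $x_c:=d(x,c)$. The metric $d_C$ on $X$ is $d_C(x,y):=\sup_{c\in C}|x_c-y_c|$ (finite since $|x_c-y_c|\le d(x,y)$). For a curve $\phi:[0,\delta)\to X$ ($\delta>0$) write $\phi_c(t):=d(\phi(t),c)$; its forward metric-coordinate derivative at $t$ is $\phi_C^+(t):=(\phi_c^+(t))_{c\in C}\in\mathbb{R}^C$, where $\phi_c^+(t):=\lim_{h\to0^+}\frac{\phi_c(t+h)-\phi_c(t)}{h}$, provided all these limits exist. Let $X^+$ be the set of curves $\phi:[0,\delta)\to X$ (any $\delta>0$), continuous with respect to $d_C$, for which $\phi_C^+(0)$ exists and $\sup_{c\in C}|\phi_c^+(0)|<\infty$. Define $\phi\sim\psi$ iff $\phi(0)=\psi(0)$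 and $\phi_C^+(0)=\psi_C^+(0)$. The tangent bundle is $TX:=X^+/\!\sim$, and $T_xX$ is the set of classes $[\phi]$ with $\phi(0)=x$. The metric $d_C^T$ on $TX$ is $d_C^T([\phi],[\psi]):=\max\{d_C(\phi(0),\psi(0)),\ \sup_{c\in C}|\phi_c^+(0)-\psi_c^+(0)|\}$. A metric-coordinate vector field is a map $V:X\to TX$ with $V(x)\in T_xX$ for each $x\in X$. It is locally Lipschitz if $V:(X,d_C)\to(TX,d_C^T)$ is locally Lipschitz, i.e. every point has a $d_C$-neighborhood and a constant $K\ge0$ with $d_C^T(V(y),V(z))\le K\,d_C(y,z)$ for $y,z$ in that neighborhood. A solution to $V$ with initial condition $x\in X$ is a curve $\sigma:[0,\delta)\to X$ ($\delta>0$), continuous with respect to $d_C$, with $\sigma(0)=x$, such that for every $t\in[0,\delta)$ the forward metric-coordinate derivative $\sigma_C^+(t)$ exists and equals $\phi_C^+(0)$ for (any) $\phi\in V(\sigma(t))$. *)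

(* Defs.v *)
From Stdlib Require Import Reals List.
From Coquelicot Require Import Coquelicot.
Open Scope R_scope.

Record is_metric {M : Type} (d : M -> M -> R) : Prop := {
  metric_nonneg : forall x y, 0 <= d x y;
  metric_eq0 : forall x y, d x y = 0 <-> x = y;
  metric_sym : forall x y, d x y = d y x;
  metric_tri : forall x y z, d x z <= d x y + d y z }.

Definition coordinatizing {M : Type} (d : M -> M -> R) (X C : M -> Prop) : Prop :=
  forall x y, X x -> X y -> x <> y -> exists c, C c /\ d x c <> d y c.

Definition metric_coord_system {M : Type} (d : M -> M -> R) (X C : M -> Prop) : Prop :=
  is_metric d /\ coordinatizing d X C.

(* supremum over c in C of a nonnegative quantity (0 if C is empty; the
   quantities used below are always bounded). *)
Definition supC {M : Type} (C : M -> Prop) (f : M -> R) : R :=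
  real (Lub_Rbar (fun r => exists c, C c /\ r = f c)).

Definition dC {M : Type} (d : M -> M -> R) (C : M -> Prop) (x y : M) : R :=
  supC C (fun c => Rabs (d x c - d y c)).

Definition dC_open {M : Type} d C (X : M -> Prop) (U : M -> Prop) : Prop :=
  forall x, X x -> U x -> exists r, 0 < r /\
    forall y, X y -> dC d C x y < r -> U y.

Definition dC_closed {M : Type} d C (X : M -> Prop) (S : M -> Prop) : Prop :=
  (forall x, S x -> X x) /\ dC_open d C X (fun x => ~ S x).

Definition dC_compact {M : Type} d C (X : M -> Prop) (K : M -> Prop) : Prop :=
  (forall x, K x -> X x) /\
  forall (I : Type) (U : I -> M -> Prop),
    (forall i, dC_open d C X (U i)) ->
    (forall x, K x -> exists i, U i x) ->
    exists l : list I, forall x, K x -> exists i, In i l /\ U i x.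

Definition dC_locally_compact {M : Type} d C (X : M -> Prop) : Prop :=
  forall x, X x -> exists K, dC_compact d C X K /\
    exists r, 0 < r /\ forall y, X y -> dC d C x y < r -> K y.

Definition is_fwd_deriv (f : R -> R) (t l : R) : Prop :=
  forall eps, 0 < eps -> exists eta, 0 < eta /\
    forall h, 0 < h < eta -> Rabs ((f (t + h) - f t) / h - l) < eps.

Definition dC_curve {M : Type} d C (X : M -> Prop) (phi : R -> M) (delta : R) : Prop :=
  0 < delta /\
  (forall t, 0 <= t < delta -> X (phi t)) /\
  (forall t, 0 <= t < delta -> forall eps, 0 < eps -> exists eta, 0 < eta /\
     forall s, 0 <= s < delta -> Rabs (s - t) < eta -> dC d C (phi s) (phi t) < eps).

Definition fwd_coord_deriv {M : Type} (d : M -> M -> R) (C : M -> Prop)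
  (phi : R -> M) (t : R) (v : M -> R) : Prop :=
  forall c, C c -> is_fwd_deriv (fun s => d (phi s) c) t (v c).

Definition in_tangent_class {M : Type} d C (X : M -> Prop)
  (phi : R -> M) (delta : R) (x : M) (v : M -> R) : Prop :=
  dC_curve d C X phi delta /\ phi 0 = x /\ fwd_coord_deriv d C phi 0 v /\
  exists B, forall c, C c -> Rabs (v c) <= B.

(* A tangent vector at x is represented by its coordinate derivative vector
   v (only the values on C matter); a vector field V assigns to x in X a
   vector V x which is realised by some curve of X^+ based at x. *)
Definition vector_field {M : Type} d C (X : M -> Prop) (V : M -> M -> R) : Prop :=
  forall x, X x -> exists phi delta, in_tangent_class d C X phi delta x (V x).

Definition dCT {M : Type} d C (x : M) (v : M -> R) (y : M) (w : M -> R) : R :=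
  Rmax (dC d C x y) (supC C (fun c => Rabs (v c - w c))).

Definition locally_lipschitz_field {M : Type} d C (X : M -> Prop) (V : M -> M -> R) : Prop :=
  forall x, X x -> exists r K, 0 < r /\ 0 <= K /\
    forall y z, X y -> X z -> dC d C x y < r -> dC d C x z < r ->
      dCT d C y (V y) z (V z) <= K * dC d C y z.

Definition is_solution {M : Type} d C (X : M -> Prop) (V : M -> M -> R)
  (sigma : R -> M) (delta : R) (x : M) : Prop :=
  dC_curve d C X sigma delta /\ sigma 0 = x /\
  forall t, 0 <= t < delta -> fwd_coord_deriv d C sigma t (V (sigma t)).

(* Main.v *)
Require Import Defs.
From Stdlib Require Import Reals Lra Lia ZArith List Classical.
From Coquelicot Require Import Coquelicot.
Open Scope R_scope.


Lemma supC_props {M : Type} (C : M -> Prop) (f : M -> R) (Bd : R) :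
 (forall c, C c -> 0 <= f c <= Bd) ->
 (forall c, C c -> f c <= supC C f) /\ 0 <= supC C f /\
 (forall m, 0 <= m -> (forall c, C c -> f c <= m) -> supC C f <= m) /\
 (0 < supC C f -> forall e, 0 < e -> exists c, C c /\ supC C f - e < f c).
Proof.
  intros Hb. unfold supC.
  set (E := fun r => exists c, C c /\ r = f c).
  destruct (Lub_Rbar_correct E) as [Hub Hlub].
  destruct (Lub_Rbar E) as [l| |]; simpl.
  - assert (Ha : forall c, C c -> f c <= l).
    { intros c Hc. apply (Hub (f c)). exists c; auto. }
    split; [exact Ha|]. split.
    + destruct (classic (exists c, C c)) as [[c Hc]|Hn].
      * specialize (Hb c Hc). specialize (Ha c Hc). lra.
      * exfalso. assert (H := Hlub m_infty). simpl in H. apply H.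
        intros x [c [Hc _]]. exfalso; apply Hn; eauto.
    + split.
      * intros m Hm Hc. apply (Hlub (Finite m)). intros x [c [Hc' ->]]. simpl. auto.
      * intros Hpos e He. apply NNPP. intros Hn.
        assert (H := Hlub (Finite (l - e))). simpl in H.
        assert (l <= l - e); [|lra]. apply H. intros x [c [Hc ->]]. simpl.
        apply Rnot_lt_le. intros Hlt. apply Hn. exists c. split; auto.
  - exfalso. assert (H := Hlub (Finite Bd)). simpl in H. apply H.
    intros x [c [Hc ->]]. simpl. apply Hb; auto.
  - split.
    + intros c Hc. exfalso. assert (H := Hub (f c)). simpl in H. apply H. exists c; auto.
    + split; [lra|]. split; [intros; lra|]. intros; lra.
Qed.

Lemma coord_bound {M : Type} (d : M -> M -> R) (x y c : M) :
  is_metric d -> Rabs (d x c - d y c) <= d x y.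
Proof.
  intros [Hn He Hs Ht].
  pose proof (Ht x y c). pose proof (Ht y x c). rewrite (Hs y x) in *.
  unfold Rabs; destruct Rcase_abs; lra.
Qed.

Lemma dC_props {M : Type} (d : M -> M -> R) (C : M -> Prop) (x y : M) :
  is_metric d ->
 (forall c, C c -> Rabs (d x c - d y c) <= dC d C x y) /\ 0 <= dC d C x y /\
 (forall m, 0 <= m -> (forall c, C c -> Rabs (d x c - d y c) <= m) -> dC d C x y <= m) /\
 (0 < dC d C x y -> forall e, 0 < e -> exists c, C c /\ dC d C x y - e < Rabs (d x c - d y c)).
Proof.
  intros Hm. unfold dC. apply (supC_props C _ (d x y)).
  intros c _. split; [apply Rabs_pos| apply coord_bound; auto].
Qed.

Lemma dC_ge {M : Type} d C (x y c : M) : is_metric d -> C c ->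
  Rabs (d x c - d y c) <= dC d C x y.
Proof. intros Hm Hc. apply (dC_props d C x y Hm); auto. Qed.

Lemma dC_nonneg {M : Type} d C (x y : M) : is_metric d -> 0 <= dC d C x y.
Proof. intros Hm. apply (dC_props d C x y Hm). Qed.

Lemma dC_le {M : Type} d C (x y : M) m : is_metric d -> 0 <= m ->
  (forall c, C c -> Rabs (d x c - d y c) <= m) -> dC d C x y <= m.
Proof. intros Hm. apply (dC_props d C x y Hm). Qed.

Lemma dC_approx {M : Type} d C (x y : M) : is_metric d -> 0 < dC d C x y ->
  forall e, 0 < e -> exists c, C c /\ dC d C x y - e < Rabs (d x c - d y c).
Proof. intros Hm. apply (dC_props d C x y Hm). Qed.

Lemma dC_refl {M : Type} d C (x : M) : is_metric d -> dC d C x x = 0.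
Proof.
  intros Hm. apply Rle_antisym; [|apply dC_nonneg; auto].
  apply dC_le; auto; [lra|]. intros c _. replace (d x c - d x c) with 0 by ring.
  rewrite Rabs_R0; lra.
Qed.

Lemma dC_sym {M : Type} d C (x y : M) : is_metric d -> dC d C x y = dC d C y x.
Proof.
  intros Hm. apply Rle_antisym; apply dC_le; auto; try apply dC_nonneg; auto;
  intros c Hc; rewrite Rabs_minus_sym; apply dC_ge; auto.
Qed.

Lemma dC_tri {M : Type} d C (x y z : M) : is_metric d ->
  dC d C x z <= dC d C x y + dC d C y z.
Proof.
  intros Hm. apply dC_le; auto.
  - pose proof (dC_nonneg d C x y Hm); pose proof (dC_nonneg d C y z Hm); lra.
  - intros c Hc. pose proof (dC_ge d C x y c Hm Hc). pose proof (dC_ge d C y z c Hm Hc).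
    replace (d x c - d z c) with ((d x c - d y c) + (d y c - d z c)) by ring.
    eapply Rle_trans; [apply Rabs_triang|]. lra.
Qed.

Definition dCF {M : Type} (d : M -> M -> R) (F : list M) (y z : M) : R :=
  fold_right (fun c acc => Rmax (Rabs (d y c - d z c)) acc) 0 F.

Lemma dCF_ge {M : Type} d (F : list M) y z c : In c F -> Rabs (d y c - d z c) <= dCF d F y z.
Proof.
  induction F as [|a F IH]; simpl; [tauto|].
  intros [->|H]; [apply Rmax_l|]. eapply Rle_trans; [apply IH; auto| apply Rmax_r].
Qed.

Lemma dCF_nonneg {M : Type} d (F : list M) y z : 0 <= dCF d F y z.
Proof.
  induction F as [|a F IH]; simpl; [lra|]. eapply Rle_trans; [exact IH|apply Rmax_r].
Qed.

Lemma dCF_lub {M : Type} d (F : list M) y z m : 0 <= m ->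
  (forall c, In c F -> Rabs (d y c - d z c) <= m) -> dCF d F y z <= m.
Proof.
  intros Hm. induction F as [|a F IH]; simpl; intros H; [lra|].
  apply Rmax_lub; [apply H; auto| apply IH; intros; apply H; auto].
Qed.

Lemma dCF_le_dC {M : Type} d C (F : list M) y z : is_metric d ->
  (forall c, In c F -> C c) -> dCF d F y z <= dC d C y z.
Proof.
  intros Hm HF. apply dCF_lub; [apply dC_nonneg; auto|].
  intros c Hc. apply dC_ge; auto.
Qed.

Lemma dCF_tri {M : Type} d (F : list M) x y z :
  dCF d F x z <= dCF d F x y + dCF d F y z.
Proof.
  apply dCF_lub.
  - pose proof (dCF_nonneg d F x y); pose proof (dCF_nonneg d F y z); lra.
  - intros c Hc. pose proof (dCF_ge d F x y c Hc). pose proof (dCF_ge d F y z c Hc).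
    replace (d x c - d z c) with ((d x c - d y c) + (d y c - d z c)) by ring.
    eapply Rle_trans; [apply Rabs_triang|]. lra.
Qed.

Lemma dCF_sym {M : Type} d (F : list M) x y : dCF d F x y = dCF d F y x.
Proof.
  apply Rle_antisym; apply dCF_lub; try apply dCF_nonneg;
  intros c Hc; rewrite Rabs_minus_sym; apply dCF_ge; auto.
Qed.

Lemma compact_closed_sub {M : Type} d C (X Kc P : M -> Prop) :
  dC_compact d C X Kc -> (forall y, P y -> Kc y) ->
  dC_open d C X (fun y => ~ P y) -> dC_compact d C X P.
Proof.
  intros [HKX HK] HPK Hop. split; [intros y Hy; apply HKX; auto|].
  intros I U HU Hcov.
  destruct (HK (option I) (fun o y => match o with Some i => U i y | None => ~ P y end))
    as [l Hl].
  - intros [i|]; auto.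
  - intros y Hy. destruct (classic (P y)) as [Hp|Hp].
    + destruct (Hcov y Hp) as [i Hi]. exists (Some i); auto.
    + exists None; auto.
  - exists (flat_map (fun o => match o with Some i => i :: nil | None => nil end) l).
    intros y Hy. destruct (Hl y (HPK y Hy)) as [[i|] [Hin Hu]].
    + exists i. split; auto. apply in_flat_map. exists (Some i). simpl; auto.
    + contradiction.
Qed.

Lemma compact_pos_lb {M : Type} d C (X P : M -> Prop) (f : M -> R) :
  dC_compact d C X P ->
  (forall y z, X y -> X z -> f y - f z <= dC d C y z) ->
  (forall y, P y -> 0 < f y) -> exists mu, 0 < mu /\ forall y, P y -> mu < f y.
Proof.
  intros [HPX HP] Hlip Hpos.
  destruct (HP nat (fun n y => / (INR n + 1) < f y)) as [l Hl].
  - intros n y Hy Hlt. exists (f y - / (INR n + 1)). split; [lra|].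
    intros z Hz Hd. pose proof (Hlip y z Hy Hz). lra.
  - intros y Hy. pose proof (Hpos y Hy).
    destruct (archimed (/ f y)) as [Hup _].
    assert (Hz : (0 <= up (/ f y))%Z).
    { apply le_IZR. pose proof (Rinv_0_lt_compat _ H). lra. }
    exists (Z.to_nat (up (/ f y))). rewrite INR_IZR_INZ, Z2Nat.id; auto.
    assert (0 < / f y) by (apply Rinv_0_lt_compat; auto).
    rewrite <- (Rinv_inv (f y)) at 2. apply Rinv_lt_contravar; [nra|lra].
  - set (N := fold_right Nat.max 0%nat l).
    exists (/ (INR N + 1)). split.
    + apply Rinv_0_lt_compat. pose proof (pos_INR N); lra.
    + intros y Hy. destruct (Hl y Hy) as [n [Hin Hn]].
      assert (Hle : (n <= N)%nat).
      { unfold N; clear -Hin. induction l as [|a l IH]; simpl in *; [tauto|].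
        destruct Hin as [->|H]; [lia| specialize (IH H); lia]. }
      apply le_INR in Hle. eapply Rle_lt_trans; [|exact Hn].
      apply Rinv_le_contravar; [pose proof (pos_INR n)|]; lra.
Qed.

Lemma real_ind (P : R -> Prop) a b : a <= b -> P a ->
 (forall s, a <= s < b -> (forall u, a <= u <= s -> P u) ->
    exists h, 0 < h /\ forall u, s < u < s + h -> P u) ->
 (forall s, a < s <= b -> (forall u, a <= u < s -> P u) -> P s) ->
 forall s, a <= s <= b -> P s.
Proof.
  intros Hab Pa Hr Hl.
  set (E := fun t => a <= t <= b /\ forall u, a <= u <= t -> P u).
  assert (HEa : E a). { split; [lra|]. intros u Hu. replace u with a by lra. auto. }
  destruct (completeness E) as [m [Hub Hlub]].
  { exists b. intros t [Ht _]. lra. }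
  { exists a; auto. }
  assert (Ham : a <= m) by (apply Hub; auto).
  assert (Hmb : m <= b) by (apply Hlub; intros t [Ht _]; lra).
  assert (Hbelow : forall u, a <= u < m -> P u).
  { intros u Hu. apply NNPP. intros Hn.
    assert (m <= u); [|lra]. apply Hlub. intros t [Ht Hp].
    apply Rnot_lt_le. intros Hlt. apply Hn. apply Hp. lra. }
  assert (Pm : P m).
  { destruct (Req_dec a m) as [<-|Hne]; auto. apply Hl; [lra|]. auto. }
  assert (HEm : E m).
  { split; [lra|]. intros u Hu. destruct (Req_dec u m) as [->|]; auto. apply Hbelow; lra. }
  assert (Hmb' : b <= m).
  { apply Rnot_lt_le. intros Hlt.
    destruct (Hr m (conj Ham Hlt) (proj2 HEm)) as [h [Hh Hu]].
    set (t := Rmin (m + h/2) b).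
    assert (E t).
    { unfold t; split. { split; [apply Rmin_glb; lra| apply Rmin_r]. }
      intros u Hu'. destruct (Rle_dec u m).
      - apply (proj2 HEm); lra.
      - apply Hu. split; [lra|]. pose proof (Rmin_l (m + h/2) b). lra. }
    assert (t <= m) by (apply Hub; auto).
    assert (m < t) by (unfold t; apply Rmin_glb_lt; lra). lra. }
  intros s Hs. apply (proj2 HEm). lra.
Qed.

Lemma net_pairs {M : Type} d C (eta : R) (L1 L2 : list M) : is_metric d -> 0 < eta ->
  exists F, (forall c, In c F -> C c) /\
  forall a b, In a L1 -> In b L2 ->
    dC d C a b <= eta \/ exists c, In c F /\ dC d C a b - eta < Rabs (d a c - d b c).
Proof.
  intros Hm He.
  assert (single : forall a, exists F, (forall c, In c F -> C c) /\
     forall b, In b L2 -> dC d C a b <= eta \/ exists c, In c F /\ dC d C a b - eta < Rabs (d a c - d b c)).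
  { intros a. induction L2 as [|b L2 IH].
    - exists nil. split; simpl; tauto.
    - destruct IH as [F [HF HB]].
      destruct (Rle_dec (dC d C a b) eta) as [Hle|Hgt].
      + exists F. split; auto. intros b' [<-|Hin]; auto.
      + destruct (dC_approx d C a b Hm ltac:(lra) eta He) as [c [Hc Hcc]].
        exists (c :: F). split. { intros c' [<-|H]; auto. }
        intros b' [<-|Hin].
        * right. exists c; simpl; auto.
        * destruct (HB b' Hin) as [H0|[c' [H1 H2]]]; auto. right. exists c'; simpl; auto. }
  induction L1 as [|a L1 IH].
  - exists nil. split; simpl; tauto.
  - destruct IH as [F1 [HF1 HB1]]. destruct (single a) as [F2 [HF2 HB2]].
    exists (F1 ++ F2). split.
    + intros c Hc. apply in_app_or in Hc. destruct Hc; auto.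
    + intros a' b [<-|Hin] Hb.
      * destruct (HB2 b Hb) as [H|[c [H1 H2]]]; auto. right. exists c. split; auto. apply in_or_app; auto.
      * destruct (HB1 a' b Hin Hb) as [H|[c [H1 H2]]]; auto. right. exists c. split; auto. apply in_or_app; auto.
Qed.

Lemma finite_net {M : Type} d C (X Bs : M -> Prop) eta : is_metric d ->
  dC_compact d C X Bs -> 0 < eta ->
  exists F, (forall c, In c F -> C c) /\
  forall y z, Bs y -> Bs z -> dC d C y z <= dCF d F y z + eta.
Proof.
  intros Hm [HBX HB] He.
  set (rho := eta / 8).
  destruct (HB M (fun w y => dC d C w y < rho)) as [L HL].
  - intros w y Hy Hwy. exists (rho - dC d C w y). split; [lra|].
    intros z Hz Hyz. pose proof (dC_tri d C w y z Hm). lra.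
  - intros y Hy. exists y. rewrite dC_refl; auto. unfold rho; lra.
  - destruct (net_pairs d C (eta/4) L L Hm ltac:(lra)) as [F [HF HP]].
    exists F. split; auto. intros y z Hy Hz.
    destruct (HL y Hy) as [a [Ha Hay]]. destruct (HL z Hz) as [b [Hb Hbz]].
    pose proof (dC_tri d C y a z Hm). pose proof (dC_tri d C a b z Hm).
    rewrite (dC_sym d C y a Hm) in *.
    pose proof (dCF_nonneg d F y z).
    destruct (HP a b Ha Hb) as [Hq|[c [Hc Hcc]]].
    + unfold rho in *; lra.
    + assert (Rabs (d a c - d b c) <= dC d C a y + dCF d F y z + dC d C b z).
      { pose proof (dC_ge d C a y c Hm (HF c Hc)). pose proof (dC_ge d C b z c Hm (HF c Hc)).
        pose proof (dCF_ge d F y z c Hc).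
        replace (d a c - d b c) with ((d a c - d y c) + (d y c - d z c) - (d b c - d z c)) by ring.
        unfold Rminus at 1. eapply Rle_trans; [apply Rabs_triang|].
        rewrite Rabs_Ropp. pose proof (Rabs_triang (d a c - d y c) (d y c - d z c)). lra. }
      unfold rho in *; lra.
Qed.

Lemma abs_between x b : Rabs x <= b -> -b <= x <= b.
Proof. unfold Rabs; destruct Rcase_abs; intros; lra. Qed.

Lemma between_abs x b : -b <= x <= b -> Rabs x <= b.
Proof. unfold Rabs; destruct Rcase_abs; intros; lra. Qed.

Lemma quot_bound a b h v e : 0 < h -> Rabs ((a - b) / h - v) < e -> Rabs ((a - b) - h * v) <= h * e.
Proof.
  intros Hh H. replace ((a - b) - h * v) with (h * ((a - b) / h - v)) by (field; lra).
  rewrite Rabs_mult, (Rabs_pos_eq h) by lra. apply Rmult_le_compat_l; lra.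
Qed.

Lemma finite_uniform {M : Type} (F : list M) (Q : M -> R -> Prop) :
  (forall c, In c F -> exists e, 0 < e /\ forall h, 0 < h < e -> Q c h) ->
  exists e, 0 < e /\ forall c h, In c F -> 0 < h < e -> Q c h.
Proof.
  induction F as [|a F IH]; intros H.
  - exists 1. split; [lra|]. intros c h [].
  - destruct IH as [e1 [He1 H1]]. { intros c Hc; apply H; simpl; auto. }
    destruct (H a (or_introl eq_refl)) as [e2 [He2 H2]].
    exists (Rmin e1 e2). split; [apply Rmin_glb_lt; auto|].
    intros c h [<-|Hc] Hh; pose proof (Rmin_l e1 e2); pose proof (Rmin_r e1 e2).
    + apply H2; lra.
    + apply H1; auto; lra.
Qed.

Lemma closed_approx {M : Type} d C (X S : M -> Prop) p : is_metric d ->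
  dC_closed d C X S -> X p -> (forall eta, 0 < eta -> exists y, S y /\ dC d C p y < eta) -> S p.
Proof.
  intros Hm [HSX Hop] Hp H. apply NNPP. intros Hn.
  destruct (Hop p Hp Hn) as [r [Hr Hb]].
  destruct (H r Hr) as [y [Hy Hpy]]. apply (Hb y (HSX y Hy) Hpy Hy).
Qed.

Lemma ball_compact {M : Type} d C (X Kc P : M -> Prop) (x : M) r2 rr :
  is_metric d -> dC_compact d C X Kc -> 0 < rr < r2 ->
  (forall y, X y -> dC d C x y < r2 -> Kc y) ->
  (forall y, P y -> X y) -> dC_open d C X (fun y => ~ P y) ->
  dC_compact d C X (fun y => P y /\ dC d C x y <= rr).
Proof.
  intros Hm HK Hrr HKin HPX HPo. apply (compact_closed_sub d C X Kc); auto.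
  - intros y [Hy Hd]. apply HKin; auto. lra.
  - intros y Hy Hn. destruct (classic (P y)) as [HP|HP].
    + assert (Hgt : rr < dC d C x y) by (apply Rnot_le_lt; intro; apply Hn; auto).
      exists (dC d C x y - rr). split; [lra|]. intros z Hz Hyz [_ Hz'].
      pose proof (dC_tri d C x z y Hm). rewrite (dC_sym d C z y Hm) in *. lra.
    + destruct (HPo y Hy HP) as [r [Hr Hb]]. exists r. split; auto.
      intros z Hz Hyz [Hz' _]. apply (Hb z Hz Hyz Hz').
Qed.

Lemma V_diff_bound {M : Type} d C (X : M -> Prop) V (y z : M) :
  vector_field d C X V -> X y -> X z ->
  forall c, C c -> Rabs (V y c - V z c) <= dCT d C y (V y) z (V z).
Proof.
  intros HV Hy Hz c Hc.
  destruct (HV y Hy) as [p1 [d1 [_ [_ [_ [B1 HB1]]]]]].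
  destruct (HV z Hz) as [p2 [d2 [_ [_ [_ [B2 HB2]]]]]].
  unfold dCT. eapply Rle_trans; [|apply Rmax_r].
  apply (supC_props C (fun c => Rabs (V y c - V z c)) (B1 + B2)); auto.
  intros c' Hc'. split; [apply Rabs_pos|].
  pose proof (HB1 c' Hc'); pose proof (HB2 c' Hc').
  eapply Rle_trans; [apply Rabs_triang|]. rewrite Rabs_Ropp. lra.
Qed.

Lemma local_step {M : Type} (d : M -> M -> R) (X C S : M -> Prop) (V : M -> M -> R)
  (sigma : R -> M) (delta t0 : R) :
  metric_coord_system d X C ->
  dC_locally_compact d C X ->
  dC_closed d C X S ->
  vector_field d C X V ->
  locally_lipschitz_field d C X V ->
  (forall x, S x -> exists (phi : R -> M) (delta : R),
      in_tangent_class d C X phi delta x (V x) /\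
      forall t, 0 <= t < delta -> S (phi t)) ->
  is_solution d C X V sigma delta (sigma 0) ->
  0 <= t0 < delta -> S (sigma t0) ->
  exists eps, 0 < eps /\ forall s1, t0 <= s1 <= t0 + eps -> S (sigma s1).
Proof.
  intros [Hm Hcoord] HLC Hcl HV HL Htan [[Hdel [HsX Hscont]] [_ Hsder]] Ht0 HSx.
  set (x := sigma t0).
  assert (HXx : X x) by (apply HsX; auto).
  destruct (HL x HXx) as [r1 [K [Hr1 [HK HLip]]]].
  destruct (HLC x HXx) as [Kc [HKc [r2 [Hr2 HKin]]]].
  set (r := Rmin r1 r2).
  assert (Hr : 0 < r) by (apply Rmin_glb_lt; auto).
  assert (Hrr1 : r <= r1) by apply Rmin_l.
  assert (Hrr2 : r <= r2) by apply Rmin_r.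
  destruct (Hscont t0 Ht0 (r/8) ltac:(lra)) as [e0 [He0 Hce]].
  set (K' := K + 1).
  set (eps := Rmin (Rmin (e0/2) (/(4*K'))) ((delta - t0)/2)).
  assert (HK' : 0 < K') by (unfold K'; lra).
  assert (Heps1 : eps <= e0/2) by (unfold eps; eapply Rle_trans; [apply Rmin_l| apply Rmin_l]).
  assert (Heps2 : eps <= /(4*K')) by (unfold eps; eapply Rle_trans; [apply Rmin_l| apply Rmin_r]).
  assert (Heps3 : eps <= (delta - t0)/2) by (unfold eps; apply Rmin_r).
  assert (Heps : 0 < eps).
  { unfold eps. repeat apply Rmin_glb_lt; try lra. apply Rinv_0_lt_compat; lra. }
  assert (HK'eps : K' * eps <= /4).
  { apply Rmult_le_compat_l with (r := K') in Heps2; [|lra].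
    replace (K' * / (4 * K')) with (/4) in Heps2 by (field; lra). lra. }
  exists eps. split; auto.
  set (BS := fun y => S y /\ dC d C x y <= r/2).
  set (Bset := fun y => X y /\ dC d C x y <= r/2).
  assert (HSX : forall y, S y -> X y) by apply Hcl.
  assert (HBScomp : dC_compact d C X BS).
  { apply (ball_compact d C X Kc S x r2 (r/2)); auto; try lra. apply Hcl. }
  assert (HBcomp : dC_compact d C X Bset).
  { apply (ball_compact d C X Kc X x r2 (r/2)); auto; try lra.
    intros y Hy Hn. exfalso; auto. }
  assert (Hsnear : forall s, t0 <= s <= t0 + eps -> 0 <= s < delta /\ X (sigma s) /\ dC d C x (sigma s) < r/8).
  { intros s Hs. assert (0 <= s < delta) by lra. split; auto. split; [apply HsX; auto|].
    rewrite dC_sym; auto. apply Hce; auto. apply Rabs_def1; lra. }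
  intros s1 Hs1.
  destruct (Hsnear s1 Hs1) as [Hs1d [HXs1 Hxs1]].
  apply (closed_approx d C X S); auto.
  intros eta0 Heta0.
  set (eta := Rmin (eta0/3) (r/16)).
  assert (Heta : 0 < eta) by (unfold eta; apply Rmin_glb_lt; lra).
  assert (Heta1 : eta <= eta0/3) by apply Rmin_l.
  assert (Heta2 : eta <= r/16) by apply Rmin_r.
  destruct (finite_net d C X Bset eta Hm HBcomp Heta) as [F [HFC HFnet]].
  set (theta := 4 * K' * eta).
  assert (Htheta : 0 < theta) by (unfold theta; nra).
  assert (Hthe_eps : theta * eps <= eta).
  { unfold theta. replace (4 * K' * eta * eps) with (4 * (K' * eps) * eta) by ring. nra. }
  set (P := fun s => exists y, BS y /\ dCF d F y (sigma s) <= theta * (s - t0)).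
  assert (HP : forall s, t0 <= s <= s1 -> P s).
  { apply real_ind.
    - lra.
    - exists x. split. { split; auto. rewrite dC_refl; auto; lra. }
      apply dCF_lub; [lra|]. intros c _. replace (d x c - d (sigma t0) c) with 0 by (unfold x; ring).
      rewrite Rabs_R0; lra.
    -
      intros s Hs Hall. destruct (Hall s ltac:(lra)) as [y [[HSy Hxy] Hy]].
      destruct (Hsnear s ltac:(lra)) as [Hsd [HXs Hxs]].
      assert (HXy : X y) by auto.
      assert (Hyds : dC d C y (sigma s) <= 2 * eta).
      { assert (Hb2 : Bset (sigma s)) by (split; auto; lra).
        pose proof (HFnet y (sigma s) (conj HXy Hxy) Hb2).
        pose proof (Rmult_le_compat_l theta (s - t0) eps ltac:(lra) ltac:(lra)). lra. }
      assert (Hxy4 : dC d C x y < r/4).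
      { pose proof (dC_tri d C x (sigma s) y Hm). rewrite (dC_sym d C (sigma s) y Hm) in *. lra. }
      assert (HVd : forall c, C c -> Rabs (V y c - V (sigma s) c) <= theta / 2).
      { intros c Hc. eapply Rle_trans; [apply (V_diff_bound d C X V y (sigma s) HV HXy HXs c Hc)|].
        eapply Rle_trans; [apply HLip; auto; lra|].
        unfold theta, K'. pose proof (dC_nonneg d C y (sigma s) Hm). nra. }
      destruct (Htan y HSy) as [phi [dy [[[Hdy [HpX Hpcont]] [Hp0 [Hpder _]]] HpS]]].
      destruct (Hpcont 0 ltac:(lra) (r/4) ltac:(lra)) as [e1 [He1 Hpc]].
      destruct (finite_uniform F (fun c h =>
          Rabs ((d (phi (0 + h)) c - d (phi 0) c) / h - V y c) < theta/4 /\
          Rabs ((d (sigma (s + h)) c - d (sigma s) c) / h - V (sigma s) c) < theta/4))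
        as [e2 [He2 Hu]].
      { intros c Hc. rewrite <- Hp0 in *.
        destruct (Hpder c (HFC c Hc) (theta/4) ltac:(lra)) as [a1 [Ha1 H1]].
        destruct (Hsder s Hsd c (HFC c Hc) (theta/4) ltac:(lra)) as [a2 [Ha2 H2]].
        exists (Rmin a1 a2). split; [apply Rmin_glb_lt; auto|].
        intros h Hh. pose proof (Rmin_l a1 a2); pose proof (Rmin_r a1 a2).
        split; [apply H1| apply H2]; lra. }
      exists (Rmin (Rmin e1 e2) dy). split; [repeat apply Rmin_glb_lt; auto|].
      intros u Hu'.
      pose proof (Rmin_l (Rmin e1 e2) dy); pose proof (Rmin_r (Rmin e1 e2) dy).
      pose proof (Rmin_l e1 e2); pose proof (Rmin_r e1 e2).
      set (h := u - s).
      assert (Hh : 0 < h) by (unfold h; lra).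
      exists (phi h). split.
      + split; [apply HpS; unfold h; lra|].
        assert (H3 : dC d C (phi h) (phi 0) < r / 4).
        { apply Hpc; [unfold h; lra|]. rewrite Rminus_0_r, Rabs_pos_eq; unfold h; lra. }
        rewrite Hp0 in H3.
        pose proof (dC_tri d C x y (phi h) Hm). rewrite (dC_sym d C y (phi h) Hm) in *. lra.
      + apply dCF_lub; [unfold h in *; nra|].
        intros c Hc. destruct (Hu c h Hc ltac:(unfold h; lra)) as [Hq1 Hq2].
        rewrite Rplus_0_l, Hp0 in Hq1.
        replace (s + h) with u in Hq2 by (unfold h; ring).
        apply quot_bound in Hq1; auto. apply quot_bound in Hq2; auto.
        pose proof (dCF_ge d F y (sigma s) c Hc) as HA.
        pose proof (HVd c (HFC c Hc)) as HB.
        apply abs_between in Hq1. apply abs_between in Hq2.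
        apply abs_between in HA. apply abs_between in HB.
        apply between_abs.
        assert (Hhv : -(h * (theta/2)) <= h * V y c - h * V (sigma s) c <= h * (theta/2))
          by (split; nra).
        replace (theta * (u - t0)) with (theta * (s - t0) + h * (theta/4) + h * (theta/4) + h * (theta/2)) by (unfold h; field).
        split; lra.
    -
      intros s Hs Hall. apply NNPP. intros Hn.
      destruct (compact_pos_lb d C X BS (fun y => dCF d F y (sigma s) - theta * (s - t0)) HBScomp)
        as [mu [Hmu Hmub]].
      + intros y z Hy Hz. pose proof (dCF_tri d F y z (sigma s)).
        pose proof (dCF_le_dC d C F y z Hm HFC). lra.
      + intros y Hy. apply Rnot_le_lt. intros Hle. apply Hn. exists y; split; auto. lra.
      + destruct (Hsnear s ltac:(lra)) as [Hsd _].
        destruct (Hscont s Hsd mu Hmu) as [e [He Hc]].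
        set (u := Rmax t0 (s - e/2)).
        assert (Hu1 : t0 <= u) by apply Rmax_l.
        assert (Hu2 : u < s) by (unfold u; apply Rmax_lub_lt; lra).
        assert (Hu3 : s - e/2 <= u) by apply Rmax_r.
        destruct (Hall u ltac:(lra)) as [y [HBy Hy]].
        pose proof (Hmub y HBy). simpl in H.
        assert (Hd : dC d C (sigma u) (sigma s) < mu).
        { apply Hc; [lra|]. apply Rabs_def1; lra. }
        pose proof (dCF_tri d F y (sigma u) (sigma s)).
        pose proof (dCF_le_dC d C F (sigma u) (sigma s) Hm HFC).
        pose proof (Rmult_le_compat_l theta (u - t0) (s - t0) ltac:(lra) ltac:(lra)).
        lra. }
  destruct (HP s1 ltac:(lra)) as [y [[HSy Hxy] Hy]].
  exists y. split; auto.
  assert (Hb2 : Bset (sigma s1)) by (split; auto; lra).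
  pose proof (HFnet y (sigma s1) (conj (HSX y HSy) Hxy) Hb2).
  pose proof (Rmult_le_compat_l theta (s1 - t0) eps ltac:(lra) ltac:(lra)).
  rewrite dC_sym; auto. lra.
Qed.

Theorem theorem8p1 (M : Type) (d : M -> M -> R) (X C S : M -> Prop)
  (V : M -> M -> R) :
  metric_coord_system d X C ->
  dC_locally_compact d C X ->
  dC_closed d C X S ->
  vector_field d C X V ->
  locally_lipschitz_field d C X V ->
  (forall x, S x -> exists (phi : R -> M) (delta : R),
      in_tangent_class d C X phi delta x (V x) /\
      forall t, 0 <= t < delta -> S (phi t)) ->
  forall (sigma : R -> M) (delta : R),
    is_solution d C X V sigma delta (sigma 0) ->
    S (sigma 0) ->
    forall t, 0 <= t < delta -> S (sigma t).
Proof.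
  intros Hmc HLC Hcl HV HL Htan sigma delta Hsol HS0 t Ht.
  pose proof Hsol as [[Hdel [HsX Hscont]] _].
  assert (Hm : is_metric d) by apply Hmc.
  apply (real_ind (fun s => S (sigma s)) 0 t); auto; try lra.
  - intros s Hs Hall.
    destruct (local_step d X C S V sigma delta s Hmc HLC Hcl HV HL Htan Hsol ltac:(lra)
      (Hall s ltac:(lra))) as [eps [Heps Hloc]].
    exists eps. split; auto. intros u Hu. apply Hloc; lra.
  - intros s Hs Hall. apply (closed_approx d C X S); auto. { apply HsX; lra. }
    intros eta Heta. destruct (Hscont s ltac:(lra) eta Heta) as [e [He Hc]].
    set (u := Rmax 0 (s - e/2)).
    assert (0 <= u) by apply Rmax_l.
    assert (u < s) by (unfold u; apply Rmax_lub_lt; lra).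
    assert (s - e/2 <= u) by apply Rmax_r.
    exists (sigma u). split; [apply Hall; lra|].
    rewrite dC_sym; auto. apply Hc; [lra|]. apply Rabs_def1; lra.
Qed.
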